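(* Assume that the constants $\lambda_R>0$, $\delta \geq 0$, $\Delta_T \geq 0$, $\Delta_\alpha \geq 0$, and $C>0$ are such that the conditions listed in the context hold for the solution $\bar{\alpha}^s$, $\bar{\alpha}^t$, $\bar{T}$ of Problem 3. Then the difference between the rates of variation of the estimated source and target label functions $f^s = \bar{U}^s \bar{\alpha}^s$ and $f^t = \bar{U}^t \bar{T} \bar{\alpha}^t$ on the source and target graphs is bounded as \[ | (f^s)^T L^s f^s - (f^t)^T L^t f^t | \leq C^2 \delta + 2 C \lambda_R \Delta_\alpha + C^2 \lambda_R ( 2 \Delta_T + \Delta_T^2 ). \]
   Context: A source graph with $N_s$ nodes has graph Laplacian $L^s$ and a target graph with $N_t$ nodes has graph Laplacian $L^t$ (Laplacian $L=D-W$ with $W$ the weight matrix and $D$ the diagonal degree matrix). Let $0=\lambda_1^s \leq \dots \leq \lambda_R^s$ and $0=\lambda_1^t \leq \dots \leq \lambda_R^t$ be the $R$ smallest eigenvalues of $L^s$ and $L^t$, with $R<N_s$, $R<N_t$, and let $\bar{U}^s \in \mathbb{R}^{N_s \times R}$, $\bar{U}^t \in \mathbb{R}^{N_t \times R}$ contain the corresponding orthonormal eigenvectors (reduced graph Fourier bases). Problem 3 is \[ \min_{\bar{\alpha}^s, \bar{\alpha}^t, \bar{T}} \| S^s \bar{U}^s \bar{\alpha}^s - y^s \|^2 + \| S^t \bar{U}^t \bar{T} \bar{\alpha}^t - y^t \|^2 + \mu_1 \| \bar{\alpha}^s - \bar{\alpha}^t \|^2 + \mu_2 \| \bar{M} \odot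 \bar{T} \|_F^2 \] subject to $\sum_{i=1}^{R} \bar{T}_{ij}^2 = 1$ for $j=1,\dots,R$, where $S^s, S^t$ are binary selection matrices picking out labeled nodes, $y^s, y^t$ the known labels, $\bar{M}_{ij}=\exp((i-j)^2/\sigma^2)$, $\odot$ the Hadamard product, $\mu_1,\mu_2>0$, $\bar{T}\in\mathbb{R}^{R\times R}$. Conditions assumed for the solution: $| \lambda_i^s - \lambda_i^t | \leq \delta$ for all $i=1,\dots,R$; $\lambda_R = \max(\lambda_R^s, \lambda_R^t)$; $\| \bar{\alpha}^s - \bar{\alpha}^t \| \leq \Delta_\alpha$; $\| \bar{T} - I \| \leq \Delta_T$ where $I$ is the $R\times R$ identity and $\|\cdot\|$ denotes the operator norm for matrices; and $\| \bar{\alpha}^s \|, \| \bar{\alpha}^t \| \leq C$. *)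

(* Defs.v *)
From HB Require Import structures.
From mathcomp Require Import all_boot all_order all_algebra.
From mathcomp Require Import all_classical all_reals all_analysis.
Set Implicit Arguments. Unset Strict Implicit. Unset Printing Implicit Defensive.
Import Order.TTheory GRing.Theory Num.Theory.
Local Open Scope ring_scope.
Local Open Scope classical_set_scope.

Section Defs.
Variable R : realType.

Definition vnorm n (x : 'cV[R]_n) : R := Num.sqrt (\sum_i (x i 0) ^+ 2).

Definition frob2 m n (A : 'M[R]_(m, n)) : R := \sum_i \sum_j (A i j) ^+ 2.

Definition opnorm m n (A : 'M[R]_(m, n)) : R :=
  sup [set vnorm (A *m x) | x in [set x : 'cV[R]_n | vnorm x <= 1]].

Definition laplacian N (W : 'M[R]_N) : 'M[R]_N :=
  diag_mx (\row_i \sum_j W i j) - W.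

Definition weight_matrix N (W : 'M[R]_N) : Prop :=
  W^T = W /\ (forall i j, 0 <= W i j).

Definition selection_matrix m N (S : 'M[R]_(m, N)) : Prop :=
  exists sel : 'I_m -> 'I_N, injective sel /\
    forall i j, S i j = (j == sel i)%:R.

(* U (N x r) collects orthonormal eigenvectors of L associated with the
   r smallest eigenvalues lam_1 <= ... <= lam_r of L: there is a full
   orthonormal eigendecomposition L = V diag(mu) V^T with mu nondecreasing,
   U consists of the first r columns of V and lam of the first r entries of mu. *)
Definition reduced_fourier_basis N r (hle : (r <= N)%N) (L : 'M[R]_N)
  (U : 'M[R]_(N, r)) (lam : 'I_r -> R) : Prop :=
  exists (V : 'M[R]_N) (mu : 'I_N -> R),
    V^T *m V = 1%:M /\ L = V *m diag_mx (\row_i mu i) *m V^T /\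
    (forall i j : 'I_N, (i <= j)%N -> mu i <= mu j) /\
    (forall i (j : 'I_r), U i j = V i (widen_ord hle j)) /\
    (forall j : 'I_r, lam j = mu (widen_ord hle j)).

Definition mask_mx r (sigma : R) : 'M[R]_r :=
  \matrix_(i, j) expR (((i%:R - j%:R) ^+ 2) / sigma ^+ 2).

Definition problem3_obj ms mt Ns Nt r
  (Ss : 'M[R]_(ms, Ns)) (St : 'M[R]_(mt, Nt))
  (Us : 'M[R]_(Ns, r)) (Ut : 'M[R]_(Nt, r))
  (ys : 'cV[R]_ms) (yt : 'cV[R]_mt) (mu1 mu2 sigma : R)
  (as_ at_ : 'cV[R]_r) (T : 'M[R]_r) : R :=
  vnorm (Ss *m Us *m as_ - ys) ^+ 2 + vnorm (St *m Ut *m T *m at_ - yt) ^+ 2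
  + mu1 * vnorm (as_ - at_) ^+ 2
  + mu2 * frob2 (map2_mx (fun a b => a * b) (mask_mx r sigma) T).

Definition problem3_feasible r (T : 'M[R]_r) : Prop :=
  forall j, \sum_i (T i j) ^+ 2 = 1.

Definition problem3_solution ms mt Ns Nt r
  (Ss : 'M[R]_(ms, Ns)) (St : 'M[R]_(mt, Nt))
  (Us : 'M[R]_(Ns, r)) (Ut : 'M[R]_(Nt, r))
  (ys : 'cV[R]_ms) (yt : 'cV[R]_mt) (mu1 mu2 sigma : R)
  (as_ at_ : 'cV[R]_r) (T : 'M[R]_r) : Prop :=
  problem3_feasible T /\
  forall (bs bt : 'cV[R]_r) (T' : 'M[R]_r), problem3_feasible T' ->
    problem3_obj Ss St Us Ut ys yt mu1 mu2 sigma as_ at_ T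
    <= problem3_obj Ss St Us Ut ys yt mu1 mu2 sigma bs bt T'.

Definition lap_variation N (L : 'M[R]_N) (f : 'cV[R]_N) : R := (f^T *m L *m f) 0 0.

End Defs.

(* Main.v *)
Set Warnings "-notation-overridden,-ambiguous-paths,-notation-incompatible-prefix".
Require Import Defs.
From HB Require Import structures.
From mathcomp Require Import all_boot all_order all_algebra.
From mathcomp Require Import all_classical all_reals all_analysis.
From mathcomp Require Import ring lra.
Set Implicit Arguments. Unset Strict Implicit. Unset Printing Implicit Defensive.
Import Order.TTheory GRing.Theory Num.Theory.
Local Open Scope ring_scope.
Local Open Scope classical_set_scope.

Section H.
Variable R : realType.

Lemma CS n (a b : 'I_n -> R) :
  (\sum_i a i * b i) ^+ 2 <= (\sum_i a i ^+ 2) * (\sum_i b i ^+ 2).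
Proof.
set A := \sum_i a i ^+ 2; set B := \sum_i b i ^+ 2; set S := \sum_i a i * b i.
have A0 : 0 <= A by apply: sumr_ge0 => i _; exact: sqr_ge0.
have e : \sum_i (A * b i - S * a i) ^+ 2 = A * (A * B - S ^+ 2).
  transitivity (\sum_i (A ^+ 2 * b i ^+ 2 - (2 * A * S) * (a i * b i) + S ^+ 2 * a i ^+ 2)).
    by apply: eq_bigr => i _; ring.
  rewrite !big_split /= sumrN -!mulr_sumr -/A -/B -/S; ring.
have h : 0 <= \sum_i (A * b i - S * a i) ^+ 2 by apply: sumr_ge0 => i _; exact: sqr_ge0.
rewrite e in h.
have [Az|Ap] := eqVneq A 0.
  have a0 : forall i, a i = 0.
    move=> i; apply/eqP; rewrite -sqrf_eq0; apply/eqP.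
    by apply: (psumr_eq0P (P := predT) (F := fun i => a i ^+ 2)) => // j _; exact: sqr_ge0.
  have -> : S = 0 by rewrite /S big1 // => i _; rewrite a0 mul0r.
  by rewrite expr0n /= mulr_ge0 // sumr_ge0 // => i _; exact: sqr_ge0.
have Ap' : 0 < A by rewrite lt0r Ap.
by move: h; rewrite pmulr_rge0 // subr_ge0.
Qed.

Definition ss n (x : 'cV[R]_n) := \sum_i x i 0 ^+ 2.

Lemma ss_ge0 n (x : 'cV[R]_n) : 0 <= ss x.
Proof. by apply: sumr_ge0 => i _; exact: sqr_ge0. Qed.

Lemma vnorm_ge0 n (x : 'cV[R]_n) : 0 <= vnorm x.
Proof. exact: sqrtr_ge0. Qed.

Lemma vnorm_sq n (x : 'cV[R]_n) : vnorm x ^+ 2 = ss x.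
Proof. by rewrite /vnorm sqr_sqrtr // ss_ge0. Qed.

Lemma sum_abs_le n (x y : 'cV[R]_n) :
  \sum_i `|x i 0| * `|y i 0| <= vnorm x * vnorm y.
Proof.
have /= := CS (fun i => `|x i 0|) (fun i => `|y i 0|).
have e : forall z : 'cV[R]_n, \sum_i `|z i 0| ^+ 2 = ss z.
  by move=> z; apply: eq_bigr => i _; rewrite real_normK ?num_real.
rewrite !e -!vnorm_sq -exprMn => H.
have p1 : 0 <= \sum_i `|x i 0| * `|y i 0| by apply: sumr_ge0 => i _; rewrite mulr_ge0.
have p2 : 0 <= vnorm x * vnorm y by rewrite mulr_ge0 // vnorm_ge0.
rewrite -(ler_pXn2r (n:=2)) //; by rewrite nnegrE.
Qed.

Lemma bil_bound n (l : 'I_n -> R) (x y : 'cV[R]_n) (c : R) :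
  0 <= c -> (forall i, `|l i| <= c) ->
  `|\sum_i l i * x i 0 * y i 0| <= c * vnorm x * vnorm y.
Proof.
move=> c0 hl.
apply: le_trans (ler_norm_sum _ _ _) _.
rewrite -mulrA; apply: le_trans (ler_wpM2l c0 (sum_abs_le x y)).
rewrite mulr_sumr; apply: ler_sum => i _.
by rewrite !normrM -mulrA; apply: ler_wpM2r => //.
Qed.


Lemma vnorm_triangle n (x y : 'cV[R]_n) : vnorm (x + y) <= vnorm x + vnorm y.
Proof.
have e : ss (x + y) = ss x + 2 * (\sum_i 1 * x i 0 * y i 0) + ss y.
  rewrite /ss mulr_sumr -!big_split /=; apply: eq_bigr => i _; rewrite !mxE /=; ring.
have h1 : `|1| <= 1 :> R by rewrite normr1.
have := bil_bound (l:=fun _ => 1) (c:=1) x y ler01 (fun i => h1).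
set S := \sum_i _ => hS.
have hS' : S <= 1 * vnorm x * vnorm y by apply: le_trans (ler_norm _) hS.
rewrite -(ler_pXn2r (n:=2)) ?nnegrE ?addr_ge0 ?vnorm_ge0 //.
rewrite vnorm_sq e -!vnorm_sq -/S; clear hS h1 e; nra.
Qed.

Lemma vnormZ n (k : R) (x : 'cV[R]_n) : vnorm (k *: x) = `|k| * vnorm x.
Proof.
have e : ss (k *: x) = k ^+ 2 * ss x.
  by rewrite /ss mulr_sumr; apply: eq_bigr => i _; rewrite mxE exprMn.
by rewrite /vnorm -/(ss _) e sqrtrM ?sqr_ge0 // sqrtr_sqr.
Qed.

Lemma ss_mul_le m n (E : 'M[R]_(m, n)) x : ss (E *m x) <= frob2 E * ss x.
Proof.
rewrite /ss /frob2 mulr_suml; apply: ler_sum => i _.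
rewrite mxE; exact: (CS (fun j => E i j) (fun j => x j 0)).
Qed.

Lemma frob2_ge0 m n (E : 'M[R]_(m, n)) : 0 <= frob2 E.
Proof. by apply: sumr_ge0 => i _; apply: sumr_ge0 => j _; exact: sqr_ge0. Qed.

Lemma opnorm_bound m n (E : 'M[R]_(m, n)) x : vnorm (E *m x) <= opnorm E * vnorm x.
Proof.
set S := [set vnorm (E *m y) | y in [set y : 'cV[R]_n | vnorm y <= 1]].
have hub : forall y, vnorm y <= 1 -> vnorm (E *m y) <= Num.sqrt (frob2 E).
  move=> y hy; rewrite /vnorm ler_sqrt ?frob2_ge0 //.
  apply: le_trans (ss_mul_le E y) _.
  rewrite -[X in _ <= X]mulr1; apply: ler_wpM2l; first exact: frob2_ge0.
  rewrite -vnorm_sq -[1](expr1n _ 2); rewrite (ler_pXn2r (n:=2)) // nnegrE ?vnorm_ge0 //.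
have hs : has_sup S.
  split.
    exists (vnorm (E *m 0)); exists 0 => //=.
    by rewrite /vnorm big1 ?sqrtr0 // => i _; rewrite mxE expr0n.
  exists (Num.sqrt (frob2 E)) => _ [y /= hy <-]; exact: hub.
have hsup : forall y, vnorm y <= 1 -> vnorm (E *m y) <= opnorm E.
  by move=> y hy; apply: (sup_upper_bound hs); exists y.
have [x0|xn] := eqVneq (vnorm x) 0.
  rewrite x0 mulr0.
  have : vnorm (E *m x) ^+ 2 <= 0.
    by rewrite vnorm_sq; apply: le_trans (ss_mul_le E x) _; rewrite -vnorm_sq x0 expr0n /= mulr0.
  by move=> h; rewrite -(ler_pXn2r (n:=2)) ?nnegrE ?vnorm_ge0 // expr0n.
have c0 : 0 < vnorm x by rewrite lt0r xn vnorm_ge0.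
have hy : vnorm ((vnorm x)^-1 *: x) <= 1.
  by rewrite vnormZ ger0_norm ?invr_ge0 ?vnorm_ge0 // mulVf.
have := hsup _ hy; rewrite -scalemxAr vnormZ ger0_norm ?invr_ge0 ?vnorm_ge0 //.
by rewrite ler_pdivrMl // mulrC.
Qed.

Lemma qf_diag N (d : 'I_N -> R) (x y : 'cV[R]_N) :
  (x^T *m diag_mx (\row_i d i) *m y) 0 0 = \sum_i d i * x i 0 * y i 0.
Proof. rewrite mul_mx_diag mxE; apply: eq_bigr => i _; rewrite !mxE; ring. Qed.

Lemma sum_lin3 (I : finType) (F G H : I -> R) a b c :
  \sum_i (a * F i + b * G i + c * H i) =
  a * \sum_i F i + b * \sum_i G i + c * \sum_i H i.
Proof. by rewrite !big_split /= -!mulr_sumr. Qed.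

Lemma lap_psd N (W : 'M[R]_N) (x : 'cV[R]_N) :
  weight_matrix W -> 0 <= (x^T *m laplacian W *m x) 0 0.
Proof.
case=> hT hpos.
have sym : forall i j, W j i = W i j.
  by move=> i j; have := congr1 (fun M : 'M[R]_N => M i j) hT; rewrite /= mxE.
set P := \sum_i \sum_j W i j * x i 0 ^+ 2.
set Q := \sum_i \sum_j W i j * x i 0 * x j 0.
have hD : (x^T *m diag_mx (\row_i \sum_j W i j) *m x) 0 0 = P.
  rewrite (qf_diag (fun i => \sum_j W i j)); apply: eq_bigr => i _.
  rewrite -mulrA mulr_suml; apply: eq_bigr => j _; ring.
have hW : (x^T *m W *m x) 0 0 = Q.
  rewrite mxE; under eq_bigr do rewrite mxE mulr_suml.
  rewrite exchange_big; apply: eq_bigr => i _; apply: eq_bigr => j _; rewrite mxE; ring.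
have hP' : \sum_i \sum_j W i j * x j 0 ^+ 2 = P.
  rewrite exchange_big; apply: eq_bigr => i _; apply: eq_bigr => j _; by rewrite sym.
have h : 0 <= \sum_i \sum_j W i j * (x i 0 - x j 0) ^+ 2.
  by apply: sumr_ge0 => i _; apply: sumr_ge0 => j _; rewrite mulr_ge0 ?sqr_ge0.
have e : \sum_i \sum_j W i j * (x i 0 - x j 0) ^+ 2 =
    1 * P + (-2) * Q + 1 * \sum_i \sum_j W i j * x j 0 ^+ 2.
  rewrite /P /Q !pair_big /= -sum_lin3; apply: eq_bigr => p _; ring.
rewrite e hP' in h.
rewrite /laplacian mulmxBr mulmxBl [X in 0 <= X]mxE hD [X in _ + X]mxE hW; lra.
Qed.

Lemma rfb_props N n (hle : (n <= N)%N) (L : 'M[R]_N) U lam :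
  (forall x : 'cV[R]_N, 0 <= (x^T *m L *m x) 0 0) ->
  reduced_fourier_basis hle L U lam ->
  (forall a, lap_variation L (U *m a) = \sum_j lam j * a j 0 * a j 0) /\
  (forall j, 0 <= lam j) /\
  (forall j k : 'I_n, (j <= k)%N -> lam j <= lam k).
Proof.
move=> psd [V [mu [hV [hL [hmono [hU hlam]]]]]].
set P : 'M[R]_(N, n) := \matrix_(i, j) (i == widen_ord hle j)%:R.
have winj : injective (widen_ord hle) by move=> a b h; apply/val_inj; exact: (congr1 val h).
have UP : U = V *m P.
  apply/matrixP => i j; rewrite hU !mxE (bigD1 (widen_ord hle j)) //= big1 => [|k hk].
    by rewrite /P mxE eqxx mulr1 addr0.
  by rewrite /P mxE (negbTE hk) mulr0.
have key : forall z : 'cV[R]_N,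
    (V *m z)^T *m L *m (V *m z) = z^T *m diag_mx (\row_i mu i) *m z.
  move=> z; rewrite hL trmx_mul !mulmxA.
  rewrite -[_ *m V^T *m V]mulmxA hV mulmx1.
  by rewrite -[_ *m V^T *m V]mulmxA hV mulmx1.
have DP : diag_mx (\row_i mu i) *m P = P *m diag_mx (\row_j lam j).
  apply/matrixP => i k; rewrite mul_diag_mx mul_mx_diag !mxE.
  by case: eqP => [->|_]; rewrite ?mulr0 ?mul0r ?mulr1 ?mul1r // hlam.
have PtP : P^T *m P = 1%:M.
  apply/matrixP => j k; rewrite !mxE (bigD1 (widen_ord hle j)) //= big1 => [|i hi].
    by rewrite !mxE eqxx mul1r addr0 (inj_eq winj).
  by rewrite !mxE (negbTE hi) mul0r.
split.
  move=> a; rewrite /lap_variation UP -(mulmxA V P a) key trmx_mul.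
  rewrite mulmxA -(mulmxA _ (diag_mx _) P) DP mulmxA -(mulmxA _ P^T P) PtP mulmx1 qf_diag //.
have mu0 : forall i, 0 <= mu i.
  move=> i; have := psd (V *m delta_mx i 0); rewrite key qf_diag.
  rewrite (bigD1 i) //= big1 => [|k hk]; last by rewrite !mxE (negbTE hk) /= !mulr0.
  by rewrite !mxE eqxx /= !mulr1 addr0.
split; first by move=> j; rewrite hlam.
by move=> j k hjk; rewrite !hlam; apply: hmono.
Qed.

Lemma main_ineq n (ls lt : 'I_n -> R) (a b e : 'cV[R]_n) (lamR delta Da DT C : R) :
  0 <= lamR -> 0 <= delta -> 0 <= DT -> 0 <= Da -> 0 <= C ->
  (forall i, `|lt i| <= lamR) -> (forall i, `|ls i - lt i| <= delta) ->
  vnorm (a - b) <= Da -> vnorm e <= DT * C -> vnorm a <= C -> vnorm b <= C ->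
  `|\sum_i ls i * a i 0 * a i 0 - \sum_i lt i * (b + e) i 0 * (b + e) i 0|
  <= C ^+ 2 * delta + 2 * C * lamR * Da + C ^+ 2 * lamR * (2 * DT + DT ^+ 2).
Proof.
move=> l0 d0 DT0 Da0 C0 hlt hd hab he ha hb.
set X := \sum_i (ls i - lt i) * a i 0 * a i 0.
set Y := \sum_i lt i * (a - b) i 0 * (a + b) i 0.
set Z := \sum_i lt i * b i 0 * e i 0.
set Wt := \sum_i lt i * e i 0 * e i 0.
have -> : \sum_i ls i * a i 0 * a i 0 - \sum_i lt i * (b + e) i 0 * (b + e) i 0
    = X + Y - 2 * Z - Wt.
  rewrite /X /Y /Z /Wt mulr_sumr -big_split /= -!sumrB; apply: eq_bigr => i _.
  rewrite !mxE; ring.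
have hX := bil_bound a a d0 hd.
have hY := bil_bound (a - b) (a + b) l0 hlt.
have hZ := bil_bound b e l0 hlt.
have hW := bil_bound e e l0 hlt.
have va := vnorm_ge0 a; have vb := vnorm_ge0 b; have ve := vnorm_ge0 e.
have vab := vnorm_ge0 (a - b); have vapb := vnorm_ge0 (a + b).
have hapb : vnorm (a + b) <= 2 * C.
  by apply: le_trans (vnorm_triangle a b) _; lra.
have p1 : vnorm a * vnorm a <= C * C by apply: ler_pM.
have p2 : vnorm (a - b) * vnorm (a + b) <= Da * (2 * C) by apply: ler_pM.
have p3 : vnorm b * vnorm e <= C * (DT * C) by apply: ler_pM.
have p4 : vnorm e * vnorm e <= (DT * C) * (DT * C) by apply: ler_pM.
have q1 : delta * (vnorm a * vnorm a) <= delta * (C * C) by apply: ler_wpM2l.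
have q2 : lamR * (vnorm (a - b) * vnorm (a + b)) <= lamR * (Da * (2 * C)) by apply: ler_wpM2l.
have q3 : lamR * (vnorm b * vnorm e) <= lamR * (C * (DT * C)) by apply: ler_wpM2l.
have q4 : lamR * (vnorm e * vnorm e) <= lamR * ((DT * C) * (DT * C)) by apply: ler_wpM2l.
rewrite -!mulrA in hX hY hZ hW.
move: hX hY hZ hW; rewrite !ler_norml => /andP[x1 x2] /andP[y1 y2] /andP[z1 z2] /andP[w1 w2].
rewrite -/X in x1 x2; rewrite -/Y in y1 y2; rewrite -/Z in z1 z2; rewrite -/Wt in w1 w2.
clear p1 p2 p3 p4; apply/andP; split; nra.
Qed.
End H.

(* R = r.+1 eigenvectors are kept (R >= 1 since lambda_1 = 0 is included). *)
Theorem proposition1 (K : realType) (Ns Nt ms mt r : nat)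
  (hs : (r.+1 < Ns)%N) (ht : (r.+1 < Nt)%N)
  (Ws : 'M[K]_Ns) (Wt : 'M[K]_Nt)
  (Us : 'M[K]_(Ns, r.+1)) (Ut : 'M[K]_(Nt, r.+1))
  (lams lamt : 'I_r.+1 -> K)
  (Ss : 'M[K]_(ms, Ns)) (St : 'M[K]_(mt, Nt))
  (ys : 'cV[K]_ms) (yt : 'cV[K]_mt)
  (mu1 mu2 sigma : K)
  (as_ at_ : 'cV[K]_r.+1) (T : 'M[K]_r.+1)
  (lamR delta DeltaT Deltaa C : K) :
  weight_matrix Ws -> weight_matrix Wt ->
  reduced_fourier_basis (ltnW hs) (laplacian Ws) Us lams ->
  reduced_fourier_basis (ltnW ht) (laplacian Wt) Ut lamt ->
  selection_matrix Ss -> selection_matrix St ->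
  0 < mu1 -> 0 < mu2 -> 0 < sigma ->
  problem3_solution Ss St Us Ut ys yt mu1 mu2 sigma as_ at_ T ->
  0 < lamR -> 0 <= delta -> 0 <= DeltaT -> 0 <= Deltaa -> 0 < C ->
  (forall i, `|lams i - lamt i| <= delta) ->
  lamR = Num.max (lams ord_max) (lamt ord_max) ->
  vnorm (as_ - at_) <= Deltaa ->
  opnorm (T - 1%:M) <= DeltaT ->
  vnorm as_ <= C -> vnorm at_ <= C ->
  `| lap_variation (laplacian Ws) (Us *m as_)
     - lap_variation (laplacian Wt) (Ut *m T *m at_) |
  <= C ^+ 2 * delta + 2 * C * lamR * Deltaa
     + C ^+ 2 * lamR * (2 * DeltaT + DeltaT ^+ 2).
Proof.
move=> wS wT fS fT _ _ _ _ _ _ lR0 d0 DT0 Da0 C0 hd hlamR hab hT ha hb.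
have [vs [s0 smono]] := rfb_props (fun x => lap_psd x wS) fS.
have [vt [t0 tmono]] := rfb_props (fun x => lap_psd x wT) fT.
have eT : T *m at_ = at_ + (T - 1%:M) *m at_ by rewrite mulmxBl mul1mx addrC subrK.
rewrite vs -mulmxA vt eT.
apply: main_ineq => //; try exact: ltW.
- move=> i; rewrite ger0_norm ?t0 //; apply: le_trans (tmono i ord_max (leq_ord i)) _.
  by rewrite hlamR le_max lexx orbT.
- apply: le_trans (opnorm_bound _ _) _.
  apply: le_trans (ler_wpM2r (vnorm_ge0 _) hT) _.
  by apply: ler_wpM2l.
Qed.
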